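(* Consistent Clifford deformations give rise to commuting stabilizers of the surface code.
   Context: Consider the surface code with qubits placed on a rectangular lattice $L$, whose stabilizer group is generated by star operators $A_{\Diamond} = \prod_{i \in \Diamond} X_i$ and plaquette operators $B_{\square} = \prod_{j \in \square} Z_j$, where $\Diamond$ and $\square$ denote cells of four nearest-neighbour qubits forming, respectively, the dual and primal sub-lattices (this is the CSS surface code). A Clifford deformation conjugates each physical qubit $i \in L$ independently by a single-qubit Clifford unitary, which amounts to replacing, on that qubit, each Pauli operator appearing in the stabilizers by another Pauli operator. Denote by $\sigma_i^s$ the (non-identity) Pauli operator measured on qubit $i \in L$ by stabilizer $s$. Each qubit $i$ is surrounded by stabilizers $v_1, v_2$ located vertically from it and stabilizers $h_1, h_2$ located horizontally from it. A Clifford deformation is called consistent if, for every qubit $i$, $\sigma_i^{v_1} = \sigma_i^{v_2} \neq \sigma_i^{h_1} = \sigma_i^{h_2}$. (For example, in the CSS surface code a qubit has $\sigma_i^{v_1} = \sigma_i^{v_2} = X_i$ and $\sigma_i^{h_1} = \sigma_i^{h_2} = Z_i$.) *)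

(* Defs.v *)
From HB Require Import structures.
From mathcomp Require Import all_boot all_order all_algebra all_field.
Set Implicit Arguments. Unset Strict Implicit. Unset Printing Implicit Defensive.
Import Order.TTheory GRing.Theory Num.Theory.
Local Open Scope ring_scope.

Inductive pauli := PX | PY | PZ.

Definition pauli_mx (p : pauli) : 'M[algC]_2 :=
  match p with
  | PX => \matrix_(i < 2, j < 2) (if i == j then 0 else 1)
  | PY => \matrix_(i < 2, j < 2)
            (if i == j then 0 else if (i : nat) == 0%N then - 'i else 'i)
  | PZ => \matrix_(i < 2, j < 2)
            (if i == j then (if (i : nat) == 0%N then 1 else -1) else 0)
  end.

(* Qubits sit at the sites (i,j) of a 2(m+1) x 2(n+1) rectangular      *)
(* lattice with periodic boundary conditions.  Stabilizers are the     *)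
(* elementary square cells; the cell labelled (a,b) contains the four  *)
(* qubits (a,b), (a+1,b), (a,b+1), (a+1,b+1).  Cells with a+b even are *)
(* the star (X-type) cells, the others the plaquette (Z-type) cells    *)
(* (checkerboard), i.e. the CSS surface code.                          *)
(* Drawn rotated by 45 degrees (u = i - j, w = i + j), the qubit (i,j) *)
(* has the cell (i,j) directly above it, the cell (i-1,j-1) directly   *)
(* below it (vertical stabilizers v1, v2) and the cells (i-1,j),       *)
(* (i,j-1) directly to its left and right (horizontal stabilizers h1,  *)
(* h2).                                                                 *)
Definition Lx (m : nat) := (m.+1).*2.
Definition Ly (n : nat) := (n.+1).*2.

Definition site (m n : nat) : finType := ('I_(Lx m) * 'I_(Ly n))%type.
Definition qubit m n := site m n.
Definition cell m n := site m n.

Definition in_cell m n (s : cell m n) (q : qubit m n) : bool :=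
  ((q.1 == s.1) || (q.1 == ordS s.1)) && ((q.2 == s.2) || (q.2 == ordS s.2)).

(* original CSS type of a cell (documentation of the undeformed code) *)
Definition css_type m n (s : cell m n) : pauli :=
  if ~~ odd (s.1 + s.2)%N then PX else PZ.

Definition v1 m n (q : qubit m n) : cell m n := (q.1, q.2).
Definition v2 m n (q : qubit m n) : cell m n := (ord_pred q.1, ord_pred q.2).
Definition h1 m n (q : qubit m n) : cell m n := (ord_pred q.1, q.2).
Definition h2 m n (q : qubit m n) : cell m n := (q.1, ord_pred q.2).

(* A deformation: sigma q s is the (non-identity) Pauli operator measured
   on qubit q by the stabilizer s (only meaningful when in_cell s q). *)
Definition deformation m n := qubit m n -> cell m n -> pauli.

Definition consistent m n (sigma : deformation m n) : Prop :=
  forall q : qubit m n,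
    sigma q (v1 q) = sigma q (v2 q) /\
    sigma q (v1 q) <> sigma q (h1 q) /\
    sigma q (h1 q) = sigma q (h2 q).

(* Multi-qubit operators as matrices on the computational basis,       *)
(* indexed by configurations {ffun qubit -> 'I_2}.                     *)
Definition config m n := {ffun qubit m n -> 'I_2}.
Definition operator m n := config m n -> config m n -> algC.

Definition op_mul m n (A B : operator m n) : operator m n :=
  fun x z => \sum_(y : config m n) A x y * B y z.

Definition op_commute m n (A B : operator m n) : Prop :=
  forall x z, op_mul A B x z = op_mul B A x z.

Definition tensor m n (P : qubit m n -> 'M[algC]_2) : operator m n :=
  fun x y => \prod_(q : qubit m n) P q (x q) (y q).

Definition deformed_stab m n (sigma : deformation m n) (s : cell m n)
  : operator m n :=
  tensor (fun q => if in_cell s q then pauli_mx (sigma q s) else 1%:M).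

(* Main.v *)
Require Import Defs.
From mathcomp Require Import all_boot all_order all_algebra all_field.
From mathcomp Require Import ring.
Set Implicit Arguments. Unset Strict Implicit. Unset Printing Implicit Defensive.
Import Order.TTheory GRing.Theory Num.Theory.
Local Open Scope ring_scope.
Lemma tensor_mul m n (P Q : qubit m n -> 'M[algC]_2) :
  forall x z, op_mul (tensor P) (tensor Q) x z = tensor (fun q => P q *m Q q) x z.
Proof.
move=> x z; rewrite /op_mul /tensor.
rewrite (eq_bigr (fun y : config m n => \prod_q (P q (x q) (y q) * Q q (y q) (z q)))); last first.
  by move=> y _; rewrite big_split.
rewrite -(bigA_distr_bigA (fun q k => P q (x q) k * Q q k (z q))).
by apply: eq_bigr => q _; rewrite mxE.
Qed.

Lemma tensor_scale m n (e : qubit m n -> algC) (P : qubit m n -> 'M[algC]_2) :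
  forall x z, tensor (fun q => e q *: P q) x z = (\prod_q e q) * tensor P x z.
Proof.
rewrite /tensor; move=> x z.
by rewrite -big_split /=; apply: eq_bigr => q _; rewrite mxE.
Qed.

Definition psgn (p1 p2 : pauli) : algC :=
  match p1, p2 with PX, PX | PY, PY | PZ, PZ => 1 | _, _ => -1 end.

Lemma sqrtCi : ('i : algC) * 'i = -1.
Proof. by rewrite -expr2 sqrCi. Qed.

Lemma pauli_comm p1 p2 :
  pauli_mx p1 *m pauli_mx p2 = psgn p1 p2 *: (pauli_mx p2 *m pauli_mx p1).
Proof.
case: p1; case: p2; apply/matrixP => i j; rewrite !mxE !big_ord_recr !big_ord0 /= !mxE;
  case: i => [[|[|//]] ?]; case: j => [[|[|//]] ?]; rewrite /= ?sqrtCi; ring.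
Qed.
Lemma odd_ordS k (i : 'I_(k.+1).*2) : odd (ordS i) = ~~ odd i.
Proof. by rewrite /= odd_mod ?odd_double. Qed.

Lemma ordS_neq k (i : 'I_(k.+1).*2) : (i == ordS i) = false.
Proof. by apply/negbTE/negP => /eqP/(congr1 (fun j : 'I__ => odd j)); rewrite odd_ordS; case: (odd i). Qed.

Lemma in2_par k (i j : 'I_(k.+1).*2) : (i == j) || (i == ordS j) ->
  (i == j) = (odd i == odd j).
Proof.
case/orP => /eqP ->; first by rewrite !eqxx.
rewrite odd_ordS; case: (odd j); apply/negbTE; rewrite eq_sym; apply/negbT; exact: ordS_neq.
Qed.

Lemma even_rows k (a b : 'I_(k.+1).*2) : odd a = odd b ->
  ~~ odd #|[pred i : 'I_(k.+1).*2 | ((i == a) || (i == ordS a)) && ((i == b) || (i == ordS b))]|.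
Proof.
move=> hab; have [<-|neq] := eqVneq a b.
  rewrite (@eq_card _ _ (pred2 a (ordS a))); last by move=> i; rewrite !inE andbb.
  rewrite card2; case: eqP => // h; by move: (ordS_neq a); rewrite -h eqxx.
rewrite eq_card0 // => i; rewrite !inE.
apply/negbTE/negP => /andP[/orP[]/eqP-> /orP[]/eqP].
- by move/eqP; rewrite (negbTE neq).
- move/(congr1 (fun j : 'I__ => odd j)); rewrite odd_ordS hab; by case: (odd b).
- move/(congr1 (fun j : 'I__ => odd j)); rewrite odd_ordS hab; by case: (odd b).
- by move/ordS_inj/eqP; rewrite (negbTE neq).
Qed.

Lemma prod_sign_even (I J : finType) (R : pred I) (C : pred J) :
  ~~ odd #|R| \/ ~~ odd #|C| ->
  \prod_(i : I) \prod_(j : J) (if R i && C j then -1 else 1 : algC) = 1.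
Proof.
have key (K : finType) (A : pred K) : ~~ odd #|A| ->
    \prod_(i : K) (if A i then -1 else 1 : algC) = 1.
  move=> hA; rewrite -big_mkcond /= prodr_const.
  by rewrite -signr_odd (negbTE hA).
case=> h.
  rewrite exchange_big /=; apply: big1 => j _.
  case: (C j).
    by under eq_bigr => i _ do rewrite andbT; exact: key.
  by apply: big1 => i _; rewrite andbF.
apply: big1 => i _; case: (R i); last by apply: big1.
exact: key.
Qed.

Lemma sig_cell m n (sigma : deformation m n) (hc : consistent sigma)
  (s : cell m n) (q : qubit m n) : in_cell s q ->
  sigma q s = if (q.1 == s.1) == (q.2 == s.2) then sigma q (v1 q) else sigma q (h1 q).
Proof.
have [e12 [_ e34]] := hc q.
case: q e12 e34 => [q1 q2]; case: s => [s1 s2] e12 e34.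
rewrite /in_cell /=; case/andP => /orP[]/eqP eq1 /orP[]/eqP eq2; subst q1 q2 => /=.
- by rewrite !eqxx.
- rewrite eqxx [ordS s2 == s2]eq_sym ordS_neq /=.
  by rewrite e34 /h2 /= ordSK.
- rewrite eqxx [ordS s1 == s1]eq_sym ordS_neq /=.
  by rewrite /h1 /= ordSK.
- rewrite [ordS s2 == s2]eq_sym ordS_neq [ordS s1 == s1]eq_sym ordS_neq /=.
  by rewrite e12 /v2 /= !ordSK.
Qed.

Lemma psgn_eq p : psgn p p = 1. Proof. by case: p. Qed.
Lemma psgn_neq p1 p2 : p1 <> p2 -> psgn p1 p2 = -1.
Proof. by case: p1; case: p2. Qed.

Theorem lemma1 (m n : nat) (sigma : deformation m n) :
  consistent sigma ->
  forall s t : cell m n,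
    op_commute (deformed_stab sigma s) (deformed_stab sigma t).
Proof.
move=> hc s t x z.
set Ms := fun q => if in_cell s q then pauli_mx (sigma q s) else 1%:M.
set Mt := fun q => if in_cell t q then pauli_mx (sigma q t) else 1%:M.
set e := fun q => if in_cell s q && in_cell t q then psgn (sigma q s) (sigma q t) else 1.
have hM q : Ms q *m Mt q = e q *: (Mt q *m Ms q).
  rewrite /Ms /Mt /e; case: (in_cell s q); case: (in_cell t q) => /=;
    [exact: pauli_comm | by rewrite ?mul1mx ?mulmx1 scale1r ..].
rewrite /deformed_stab !tensor_mul -/Ms -/Mt.
have -> : tensor (fun q => Ms q *m Mt q) x z = tensor (fun q => e q *: (Mt q *m Ms q)) x z.
  by rewrite /tensor; apply: eq_bigr => q _; rewrite hM.
rewrite tensor_scale.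
suff -> : \prod_q e q = 1 by rewrite mul1r.
set D := (odd s.1 (+) odd s.2) == (odd t.1 (+) odd t.2).
have hE q : e q = if in_cell s q && in_cell t q then (if D then 1 else -1) else 1.
  rewrite /e; case hin: (in_cell s q && in_cell t q) => //.
  case/andP: hin => hs ht.
  rewrite (sig_cell hc hs) (sig_cell hc ht).
  move: (hs) (ht); rewrite /in_cell => /andP[hs1 hs2] /andP[ht1 ht2].
  rewrite (in2_par hs1) (in2_par hs2) (in2_par ht1) (in2_par ht2) /D.
  have [_ [hne _]] := hc q.
  case: (odd q.1); case: (odd q.2); case: (odd s.1); case: (odd s.2);
    case: (odd t.1); case: (odd t.2) => /=;
    by rewrite ?psgn_eq ?psgn_neq // => /esym.
under eq_bigr => q _ do rewrite hE.
case hD: D; first by apply: big1 => q _; case: ifP.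
pose R := fun i : 'I_(Lx m) => ((i == s.1) || (i == ordS s.1)) && ((i == t.1) || (i == ordS t.1)).
pose C := fun j : 'I_(Ly n) => ((j == s.2) || (j == ordS s.2)) && ((j == t.2) || (j == ordS t.2)).
have -> : \prod_(q : qubit m n) (if in_cell s q && in_cell t q then -1 else 1 : algC)
   = \prod_i \prod_j (if R i && C j then -1 else 1).
  rewrite pair_big; apply: eq_big => // [[i j]] _.
  by rewrite /in_cell /R /C /= andbACA.
apply: prod_sign_even.
move: hD; rewrite /D.
case e1: (odd s.1 == odd t.1).
  by move=> _; left; apply: even_rows; apply/eqP.
case e2: (odd s.2 == odd t.2).
  by move=> _; right; apply: even_rows; apply/eqP.
by move: e1 e2; case: (odd s.1); case: (odd s.2); case: (odd t.1); case: (odd t.2).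
Qed.
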